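(* For every integer $n\ge 1$ and every positive divisor $k$ of $n$, $F_{n,k}=1$.
   Context: Define maps $G,S:\mathbb Z^2\to\mathbb Z^2$ by $G(x,y)=(x+y,y)$ and $S(x,y)=(3x-2y+1,\,2x-y+1)$. Define the array $(F_{n,k})_{n,k\ge 0}$ by $F_{0,0}=1$ and, for $(n,k)\neq(0,0)$, $F_{n,k}$ is the number of finite words $w=w_1w_2\cdots w_m$ ($m\ge 0$) over the alphabet $\{G,S\}$ with $w_1\circ w_2\circ\cdots\circ w_m(1,1)=(n,k)$ (the empty word acts as the identity). Equivalently: start with all entries $0$, set $F_{0,0}=1$ and $F_{1,1}=1$, and thereafter, whenever an entry $F_{n,k}$ with $n\ge 1$ changes its value, increase $F_{n+k,k}$ and $F_{3n+1-2k,\,2n+1-k}$ by $1$. *)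

(* Defs.v *)
From Stdlib Require Import ZArith List.
Open Scope Z_scope.

Inductive letter : Type := LG | LS.

Definition act (l : letter) (p : Z * Z) : Z * Z :=
  let (x, y) := p in
  match l with
  | LG => (x + y, y)
  | LS => (3 * x - 2 * y + 1, 2 * x - y + 1)
  end.

Definition eval_word (w : list letter) : Z * Z :=
  fold_right act (1, 1) w.

(* For (n,k) <> (0,0), F_{n,k} is the number of words w with
   eval_word w = (n,k); "F_{n,k} = 1" means there is exactly one such word. *)
Definition F_is_one (n k : Z) : Prop :=
  exists! w : list letter, eval_word w = (n, k).

(* Main.v *)
Require Import Defs.
From Stdlib Require Import ZArith List Lia.
Open Scope Z_scope.

Lemma inv_word (w : list letter) :
  1 <= snd (eval_word w) <= fst (eval_word w).
Proof.
  induction w as [|l w IH]; [simpl; lia|].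
  change (eval_word (l :: w)) with (act l (eval_word w)).
  destruct (eval_word w) as [x y]; destruct l; cbv beta iota delta [act fst snd] in *; lia.
Qed.

Lemma eval_cons l w : eval_word (l :: w) = act l (eval_word w).
Proof. reflexivity. Qed.

Lemma main_aux (m : nat) : forall n k, n < Z.of_nat m -> 1 <= k -> (k | n) -> k <= n ->
  exists w, eval_word w = (n, k) /\ forall w', eval_word w' = (n, k) -> w' = w.
Proof.
  induction m as [|m IH]; intros n k Hm Hk Hd Hkn; [lia|].
  destruct (Z.eq_dec n k) as [E|E].
  - subst n. clear Hd. destruct (Z.eq_dec k 1) as [E1|E1].
    + subst k. exists nil. split; [reflexivity|].
      intros [|l w'] H; [reflexivity|]. exfalso.
      rewrite eval_cons in H. pose proof (inv_word w') as Hinv.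
      destruct (eval_word w') as [a b]; destruct l; cbv beta iota delta [act fst snd] in H, Hinv |- *;
        apply pair_equal_spec in H; destruct H; lia.
    + destruct (IH (k-1) (k-1)) as [w0 [H0 U0]]; try lia; [exists 1; lia|].
      exists (LS :: w0). split.
      * rewrite eval_cons, H0. cbv beta iota delta [act]. f_equal; lia.
      * intros [|l w'] H.
        -- simpl in H. apply pair_equal_spec in H; destruct H; lia.
        -- rewrite eval_cons in H. pose proof (inv_word w') as Hinv.
           destruct (eval_word w') as [a b] eqn:Ew; destruct l; cbv beta iota delta [act fst snd] in H, Hinv |- *;
             apply pair_equal_spec in H; destruct H; [lia|].
           f_equal. apply U0. rewrite Ew. f_equal; lia.
  - destruct Hd as [c Hc]. assert (Hc1 : c >= 1) by nia. assert (Hc2 : c <> 1) by (intro; subst; lia). assert (Hn2 : 2 * k <= n) by (subst n; nia).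
    destruct (IH (n-k) k) as [w0 [H0 U0]]; try lia.
    { exists (c-1). lia. }
    exists (LG :: w0). split.
    + rewrite eval_cons, H0. cbv beta iota delta [act]. f_equal; lia.
    + intros [|l w'] H.
      * simpl in H. apply pair_equal_spec in H; destruct H; lia.
      * rewrite eval_cons in H. pose proof (inv_word w') as Hinv.
        destruct (eval_word w') as [a b] eqn:Ew; destruct l; cbv beta iota delta [act fst snd] in H, Hinv |- *;
          apply pair_equal_spec in H; destruct H; [|lia].
        f_equal. apply U0. rewrite Ew. f_equal; lia.
Qed.

Theorem proposition7 (n k : Z) (hn : 1 <= n) (hk : 0 < k) (hkn : (k | n)%Z) :
  exists! w : list letter, eval_word w = (n, k).
Proof.
  assert (k <= n) by (apply Z.divide_pos_le; [lia|exact hkn]).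
  destruct (main_aux (S (Z.to_nat n)) n k) as [w [H1 H2]]; try lia; auto.
  exists w. split; [exact H1|]. intros w' H'. symmetry. apply H2. exact H'.
Qed.
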